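(* Let $(X_t)_{t\in\mathbb{N}}$ be i.i.d. real random variables on a probability space $(\Omega,\mathcal{F},\mathbb{P})$ with $\mathbb{E}[|X_1|]<\infty$ and $\mathbb{E}[X_1]=0$, and define $r(K)=\mathbb{E}\big[|X_1|\mathbf{1}_{\{|X_1|>K\}}\big]$ for $K\ge0$. Then for all $\varepsilon>0$, $\gamma>0$ and $K\ge1$, $$\mathbb{P}\Big(\sup_{t\in\mathbb{N}}\frac{1}{\gamma+t}\Big|\sum_{s=1}^tX_s\Big| > \varepsilon + r(K)\Big) \le \frac{8K^2}{\gamma\varepsilon^2} + \Big(\frac{16}{\varepsilon^2}+2\Big)r(K).$$ *)

(* Defs.v *)
From HB Require Import structures.
From mathcomp Require Import all_boot all_order all_algebra.
From mathcomp Require Import all_classical all_reals all_analysis.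
Set Implicit Arguments. Unset Strict Implicit. Unset Printing Implicit Defensive.
Import Order.TTheory GRing.Theory Num.Theory.
Local Open Scope classical_set_scope.
Local Open Scope ring_scope.

Definition mutually_independent d (T : measurableType d) (R : realType)
  (P : probability T R) (X : nat -> {RV P >-> R}) : Prop :=
  forall (s : seq nat) (B : nat -> set R), uniq s ->
    (forall i, measurable (B i)) ->
    P (\bigcap_(i in [set i | i \in s]) (X i @^-1` B i)) =
    (\prod_(i <- s) P (X i @^-1` B i))%E.

Definition identically_distributed d (T : measurableType d) (R : realType)
  (P : probability T R) (X : nat -> {RV P >-> R}) : Prop :=
  forall (t : nat) (B : set R), measurable B ->
    P (X t @^-1` B) = P (X 0%N @^-1` B).

Definition iid d (T : measurableType d) (R : realType)
  (P : probability T R) (X : nat -> {RV P >-> R}) : Prop :=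
  mutually_independent X /\ identically_distributed X.

Definition tail_mean d (T : measurableType d) (R : realType)
  (P : probability T R) (Y : {RV P >-> R}) (K : R) : \bar R :=
  (\int[P]_(w in [set w | (K < `|Y w|)%R]) (`|Y w|)%:E)%E.

(* Main.v *)
Require Import Defs.
From HB Require Import structures.
From mathcomp Require Import all_boot all_order all_algebra.
From mathcomp Require Import all_classical all_reals all_analysis.
From mathcomp Require Import ring lra measurable_realfun.
Import Order.TTheory GRing.Theory Num.Theory.
Local Open Scope classical_set_scope.
Local Open Scope ring_scope.


Section RealLemmas.
Variable R : realType.
Implicit Types x y a b g : R.

Lemma inv_step1 b : 0 < b -> ((b + 1)^-1) ^+ 2 <= b^-1 - (b + 1)^-1.
Proof.
move=> b0.
have b1 : 0 < b + 1 by lra.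
have u0 : 0 < b^-1 by rewrite invr_gt0.
have v0 : 0 < (b+1)^-1 by rewrite invr_gt0.
have hu : b * b^-1 = 1 by rewrite mulfV ?gt_eqF.
have hv : (b+1) * (b+1)^-1 = 1 by rewrite mulfV ?gt_eqF.
set u := b^-1 in u0 hu *; set v := (b+1)^-1 in v0 hv *.
nra.
Qed.

Lemma inv_step2 b : 0 < b -> ((b + 1)^-1) ^+ 2 <= 2 * b^-1 - 2 * (b + 1)^-1.
Proof.
move=> b0; have := @inv_step1 b b0.
have v0 : 0 < (b+1)^-1 by rewrite invr_gt0; lra.
have : (b+1)^-1 <= b^-1 by rewrite lef_pV2 ?posrE; lra.
nra.
Qed.


Lemma tel_sum g n : 0 < g ->
  \sum_(s < n) ((g + s.+1%:R)^-1) ^+ 2 <= g^-1 - (g + n%:R)^-1.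
Proof.
move=> g0; elim: n => [|n IH]; first by rewrite big_ord0 addr0 subrr.
rewrite big_ord_recr /= -natr1 addrA.
have gn : 0 < g + n%:R by rewrite ltr_wpDr.
have := inv_step1 _ gn; lra.
Qed.

Lemma tel_sum1 g n : 0 < g ->
  \sum_(s < n) ((g + s.+1%:R)^-1) ^+ 2 <= g^-1.
Proof.
move=> g0; apply: le_trans (tel_sum _ n g0) _.
have : 0 < (g + n%:R)^-1 by rewrite invr_gt0 ltr_wpDr.
lra.
Qed.

Lemma tail_sum g x n : 0 < g -> 1 <= x ->
  \sum_(s < n) (if x <= g + s.+1%:R then ((g + s.+1%:R)^-1) ^+ 2 else 0)
  <= 3 * x^-1.
Proof.
move=> g0 x1.
have x0 : 0 < x by lra.
pose G y := if y < x then 0 else x^-1 ^+ 2 + 2 * x^-1 - 2 * y^-1.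
have xi0 : 0 < x^-1 by rewrite invr_gt0.
have xi1 : x^-1 <= 1 by rewrite invf_le1.
have Gb y : 0 < y -> G y <= 3 * x^-1.
  move=> y0; rewrite /G; case: ifP => _; first lra.
  have : 0 < y^-1 by rewrite invr_gt0.
  nra.
suff : \sum_(s < n) (if x <= g + s.+1%:R then ((g + s.+1%:R)^-1) ^+ 2 else 0)
   <= G (g + n%:R).
  move=> h; apply: le_trans h _; apply: Gb; exact: ltr_wpDr.
elim: n => [|n IH].
  rewrite big_ord0 addr0 /G; case: ifPn => //; rewrite -leNgt => xg.
  have : g^-1 <= x^-1 by rewrite lef_pV2 ?posrE.
  have : 0 <= x^-1 ^+ 2 by apply: sqr_ge0.
  lra.
rewrite big_ord_recr /=.
set y := g + n%:R.
have y0 : 0 < y by rewrite /y ltr_wpDr.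
have ->: g + n.+1%:R = y + 1 by rewrite /y -natr1 addrA.
have a0 : 0 < y + 1 by lra.
move: IH; rewrite /G -/y.
have [ya|ya] := ltP y x; have [xa|xa] := leP x (y + 1); rewrite ?xa.
- move=> IH.
  have h1 : (y + 1)^-1 <= x^-1 by rewrite lef_pV2 ?posrE.
  have h2 : 0 < (y + 1)^-1 by rewrite invr_gt0.
  have : ((y + 1)^-1) ^+ 2 <= x^-1 ^+ 2.
    by rewrite lerXn2r ?nnegrE; lra.
  lra.
- move=> IH; lra.
- move=> IH; have := inv_step2 _ y0. lra.
- lra.
Qed.

Lemma count_sum y n : 0 <= y ->
  \sum_(s < n) (if s.+1%:R < y then 1 else 0) <= y :> R.
Proof.
move=> y0.
suff : \sum_(s < n) (if s.+1%:R < y then 1 else 0) <= y /\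
       \sum_(s < n) (if s.+1%:R < y then 1 else 0) <= n%:R :> R by case.
elim: n => [|n [IH1 IH2]]; first by rewrite big_ord0.
rewrite big_ord_recr /= -natr1; case: ifP => h; split; lra.
Qed.

End RealLemmas.


Section Indep.
Context d (T : measurableType d) (R : realType) (P : probability T R)
  (X : nat -> {RV P >-> R}).
Hypothesis hind : mutually_independent X.
Hypothesis hid : identically_distributed X.

Definition indep_from (j : nat) (A : set T) : Prop :=
  measurable A /\ forall (s : seq nat) (B : nat -> set R), uniq s ->
    (forall i, i \in s -> (j <= i)%N) -> (forall i, measurable (B i)) ->
    P (A `&` \bigcap_(i in [set i | i \in s]) (X i @^-1` B i)) =
    (P A * \prod_(i <- s) P (X i @^-1` B i))%E.

Lemma indep_fromT : indep_from 0 setT.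
Proof.
split; first exact: measurableT.
move=> s B us _ mB; rewrite setTI probability_setT mul1e.
exact: hind.
Qed.

Lemma indep_from_step j A B : indep_from j A -> measurable B ->
  P (A `&` X j @^-1` B) = (P A * P (X j @^-1` B))%E /\
  indep_from j.+1 (A `&` X j @^-1` B).
Proof.
move=> [mA hA] mB.
have h1 : P (A `&` X j @^-1` B) = (P A * P (X j @^-1` B))%E.
  have := hA [:: j] (fun _ => B) erefl _ (fun _ => mB).
  have -> : [set i | i \in [:: j]] = [set j].
    by apply/seteqP; split => i /=; rewrite inE => /eqP.
  rewrite bigcap_set1 big_seq1; apply => i; rewrite inE => /eqP ->.
  done.
split => //; split.
  by apply: measurableI => //; exact: measurable_funPTI.
move=> s B' us hs mB'.
have js : j \notin s by apply/negP => /hs; rewrite ltnn.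
pose B'' i := if i == j then B else B' i.
have := hA (j :: s) B'' _ _ _.
rewrite /= js us => /(_ erefl).
have -> : (A `&` \bigcap_(i in [set i | i \in j :: s]) X i @^-1` B'' i) =
   (A `&` X j @^-1` B `&` \bigcap_(i in [set i | i \in s]) X i @^-1` B' i).
  apply/seteqP; split => w /=.
  - move=> [Aw H]; split; first split => //.
      have := H j; rewrite /B'' eqxx; apply; exact: mem_head.
    move=> i si; have := H i; rewrite /B''.
    case: eqP => [ij|_]; first by move: js; rewrite -ij si.
    apply; rewrite /= inE; apply/orP; right; exact: si.
  - move=> [[Aw Bw] H]; split => // i; rewrite /= inE /B''.
    case: eqP => [->//|_] /= si; exact: H.
rewrite big_cons /B'' eqxx.
rewrite (eq_big_seq (fun i => P (X i @^-1` B' i))); last first.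
  by move=> i si; case: eqP => // ij; move: js; rewrite -ij si.
move=> ->; first by rewrite h1 muleA.
- by move=> i; rewrite inE => /orP[/eqP->//|/hs/ltnW].
- by move=> i; rewrite /B''; case: eqP.
Qed.

End Indep.


Section Rec.
Context d (T : measurableType d) (R : realType) (P : probability T R)
  (X : nat -> {RV P >-> R}).
Hypothesis hind : mutually_independent X.
Hypothesis hid : identically_distributed X.
Variables (n : nat) (e g : R) (gs : nat -> R -> R) (V : nat -> seq R).
Hypotheses (He : 0 < e) (Hg : 0 < g).
Hypothesis mgs : forall s, measurable_fun setT (gs s).
Hypothesis memV : forall s x, gs s x \in V s.

Let w (t : nat) := (g + t%:R)^-1.
Local Notation indep := (@indep_from d T R P X).
Definition pv (s : nat) (v : R) := fine (P (X 0 @^-1` (gs s @^-1` [set v]))).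
Hypothesis hp1 : forall s, \sum_(v <- V s) pv s v = 1.
Hypothesis hp0 : forall s, \sum_(v <- V s) pv s v * v = 0.
Definition sig2 s := \sum_(v <- V s) pv s v * v ^+ 2.

Definition Ev (j : nat) (x : R) := [set om | exists t, (j <= t <= n)%N /\
   e < w t * `|x + \sum_(j <= s < t) gs s (X s om)| ].
Definition bnd j x :=
  (w j ^+ 2 * x ^+ 2 + \sum_(j <= s < n) w s.+1 ^+ 2 * sig2 s) / e ^+ 2.

Lemma Pfin (A : set T) : measurable A -> P A = (fine (P A))%:E.
Proof. by move=> mA; rewrite fineK // fin_num_measure. Qed.

Lemma pv_ge0 s v : 0 <= pv s v.
Proof. exact/fine_ge0/measure_ge0. Qed.

Lemma mpre s v : measurable (gs s @^-1` [set v]).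
Proof. by have := mgs s measurableT [set v] (measurable_set1 v); rewrite setTI. Qed.

Lemma sig2_ge0 s : 0 <= sig2 s.
Proof. by apply: sumr_ge0 => v _; apply: mulr_ge0 => //; [exact: pv_ge0|exact: sqr_ge0]. Qed.

Lemma bnd_ge0 j x : 0 <= bnd j x.
Proof.
apply: divr_ge0; last exact: sqr_ge0.
apply: addr_ge0; first by apply: mulr_ge0; exact: sqr_ge0.
by rewrite big_seq_cond; apply: sumr_ge0 => s _; apply: mulr_ge0; [exact: sqr_ge0|exact: sig2_ge0].
Qed.

Lemma w_gt0 t : 0 < w t.
Proof. by rewrite /w invr_gt0 ltr_wpDr. Qed.

Lemma w_dec t : w t.+1 <= w t.
Proof.
rewrite /w lef_pV2 ?posrE ?ltr_wpDr// lerD2l ler_nat; exact: leqnSn.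
Qed.

Lemma mEv j x : measurable (Ev j x).
Proof.
have -> : Ev j x = \bigcup_(t in [set t | (j <= t <= n)%N])
   [set om | e < w t * `|x + \sum_(j <= s < t) gs s (X s om)| ].
  by apply/seteqP; split => om /= [t [ht h]]; exists t.
apply: bigcup_measurable => t _.
have mF : measurable_fun setT
   (fun om => w t * `|x + \sum_(j <= s < t) gs s (X s om)|).
  apply: measurable_funM; first exact: measurable_cst.
  apply: (measurableT_comp (@normr_measurable _ _)).
  apply: measurable_funD; first exact: measurable_cst.
  apply: measurable_sum => s.
  exact: (measurableT_comp (mgs s) (measurable_funPT (X s))).
have := mF measurableT _ (measurable_itv `]e, +oo[); rewrite setTI.
congr measurable; apply/seteqP; split => om /=; rewrite in_itv /= andbT //.
Qed.


Lemma sub_bigU (I : Type) (s : seq I) (F : I -> set T) :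
  (forall i, measurable (F i)) ->
  (P (\big[setU/set0]_(i <- s) F i) <= \sum_(i <- s) P (F i))%E.
Proof.
move=> mF; elim: s => [|i s IH]; first by rewrite !big_nil measure0.
rewrite !big_cons; apply: le_trans (measureU2 _ (mF i) _) _.
  by apply: bigsetU_measurable => k _; exact: mF.
exact: leeD.
Qed.

Lemma RI j x : (j < n)%N ->
  \sum_(v <- V j) pv j v * bnd j.+1 (x + v) <= bnd j x.
Proof.
move=> jn.
rewrite [bnd j x]/bnd (big_ltn jn).
set C := \sum_(j.+1 <= s < n) w s.+1 ^+ 2 * sig2 s.
set a := w j.+1.
have E1 : \sum_(v <- V j) pv j v * bnd j.+1 (x + v) =
  ((a ^+ 2 * x ^+ 2 + C) * \sum_(v <- V j) pv j v
   + (2 * a ^+ 2 * x) * \sum_(v <- V j) pv j v * v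
   + a ^+ 2 * \sum_(v <- V j) pv j v * v ^+ 2) / e ^+ 2.
  rewrite !mulr_sumr -!big_split /= mulr_suml; apply: eq_bigr => v _.
  rewrite /bnd -/C -/a; ring.
rewrite E1 hp1 hp0 -/(sig2 j) mulr1 mulr0 addr0.
have e2 : 0 < e ^+ 2 by rewrite exprn_gt0.
rewrite ler_pM2r ?invr_gt0 //.
have a0 : 0 < a by exact: w_gt0.
have aw : a <= w j by exact: w_dec.
have : a ^+ 2 <= w j ^+ 2 by rewrite lerXn2r ?nnegrE; lra.
have : 0 <= x ^+ 2 by exact: sqr_ge0.
nra.
Qed.

Lemma big_case j x A : indep j A -> e < w j * `|x| ->
  (P (A `&` Ev j x) <= P A * (bnd j x)%:E)%E.
Proof.
move=> [mA _] hx.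
apply: le_trans (measureIl P mA (mEv j x)) _.
apply: lee_pemulr; first exact: measure_ge0.
rewrite lee_fin /bnd ler_pdivlMr ?exprn_gt0 // mul1r.
have h1 : e ^+ 2 < w j ^+ 2 * x ^+ 2.
  have hx2 : `|x| ^+ 2 = x ^+ 2 by rewrite real_normK // num_real.
  rewrite -hx2.
  have w0 := w_gt0 j.
  rewrite -exprMn ltr_pXn2r // ?nnegrE ?ltW //.
  exact: lt_trans He hx.
have : 0 <= \sum_(j <= s < n) w s.+1 ^+ 2 * sig2 s.
  by rewrite big_seq_cond; apply: sumr_ge0 => s _; apply: mulr_ge0; [exact: sqr_ge0|exact: sig2_ge0].
lra.
Qed.

Lemma in_bigU (s : seq R) (F : R -> set T) i om :
  i \in s -> F i om -> (\big[setU/set0]_(k <- s) F k) om.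
Proof.
elim: s => [//|k s IH]; rewrite inE big_cons => /orP[/eqP->|/IH h] Fi.
  by left.
by right; exact: h.
Qed.

Lemma rec k : forall j x A, (j + k = n)%N -> indep j A ->
  (P (A `&` Ev j x) <= P A * (bnd j x)%:E)%E.
Proof.
elim: k => [|k IH] j x A hjk hA.
  rewrite addn0 in hjk; subst j.
  have [hx|hx] := ltP e (w n * `|x|); first exact: big_case.
  have -> : Ev n x = set0.
    apply/seteqP; split => om //= [t [/andP[h1 h2] h]].
    have tn : t = n by apply/eqP; rewrite eqn_leq h1 h2.
    by move: h; rewrite tn big_geq // addr0 ltNge hx.
  rewrite setI0 measure0; apply: mule_ge0; first exact: measure_ge0.
  rewrite lee_fin; exact: bnd_ge0.
have jn : (j < n)%N by rewrite -hjk addnS ltnS leq_addr.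
have hjk' : (j.+1 + k = n)%N by rewrite addSn -addnS.
have [hx|hx] := ltP e (w j * `|x|); first exact: big_case.
case: (hA) => mA _.
pose Av v := A `&` X j @^-1` (gs j @^-1` [set v]).
have hAv v := @indep_from_step d T R P X j A _ hA (mpre j v).
have mAv v : measurable (Av v) by case: (hAv v) => _ [].
have cover : A `&` Ev j x `<=` \big[setU/set0]_(v <- V j) (Av v `&` Ev j.+1 (x + v)).
  move=> om [Aom [t [/andP[jt tn] h]]].
  apply: (@in_bigU _ _ (gs j (X j om))); first exact: memV.
  split; first by split.
  have jt' : (j < t)%N.
    rewrite ltn_neqAle jt andbT; apply/eqP => tj.
    by move: h; rewrite -tj big_geq // addr0 ltNge hx.
  exists t; split; first by rewrite jt' tn.
  by move: h; rewrite (big_ltn jt') addrA.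
apply: le_trans (le_measure _ _ _ cover) _.
- by rewrite inE; apply: measurableI => //; exact: mEv.
- rewrite inE; apply: bigsetU_measurable => v _; apply: measurableI => //.
  exact: mEv.
apply: le_trans.
  by apply: sub_bigU => v; apply: measurableI => //; exact: mEv.
apply: le_trans.
  apply: lee_sum => v _; exact: (IH j.+1 (x + v) (Av v) hjk' (hAv v).2).
have hPA : P A = (fine (P A))%:E by exact: Pfin.
set a := fine (P A) in hPA *.
have -> : (\sum_(v <- V j) P (Av v) * (bnd j.+1 (x + v))%:E)%E =
   (a * \sum_(v <- V j) pv j v * bnd j.+1 (x + v))%:E.
  rewrite mulr_sumr -sumEFin; apply: eq_bigr => v _.
  rewrite (hAv v).1 hid; last exact: mpre.
  have hB : P (X 0 @^-1` (gs j @^-1` [set v])) = (pv j v)%:E.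
    by rewrite /pv fineK // fin_num_measure //; exact: measurable_funPTI (mpre j v).
  by rewrite hB hPA -!EFinM mulrA.
rewrite hPA -EFinM lee_fin ler_wpM2l //; last exact: RI.
by rewrite /a fine_ge0 // measure_ge0.
Qed.

End Rec.


Section GL.
Context d (T : measurableType d) (R : realType) (P : probability T R).

Lemma GL (Y : {RV P >-> R}) (f : R -> R) (V : seq R) (h : R -> R) :
  measurable_fun setT f -> uniq V -> (forall x, f x \in V) ->
  (\int[P]_w (h (f (Y w)))%:E =
   (\sum_(v <- V) h v * fine (P (Y @^-1` (f @^-1` [set v]))))%:E)%E.
Proof.
move=> mf uV memV.
have mA v : measurable (Y @^-1` (f @^-1` [set v])).
  apply: measurable_funPTI.
  by have := mf measurableT [set v] (measurable_set1 v); rewrite setTI.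
have pt w : h (f (Y w)) =
    \sum_(v <- V) h v * \1_(Y @^-1` (f @^-1` [set v])) w.
  rewrite (bigD1_seq (f (Y w))) //= indicE.
  have -> : (w \in Y @^-1` (f @^-1` [set f (Y w)])) = true.
    by apply: mem_set.
  rewrite mulr1 big1 ?addr0 // => v /negbTE hv.
  rewrite indicE.
  have -> : (w \in Y @^-1` (f @^-1` [set v])) = false.
    apply/negbTE/negP => /set_mem /= hv'.
    by move: hv; rewrite hv' eqxx.
  by rewrite mulr0.
under eq_integral do rewrite pt -sumEFin.
rewrite integral_sum //; last first.
  move=> v; under eq_fun do rewrite EFinM.
  apply: integrableZl => //; exact: integrable_indic.
rewrite -sumEFin; apply: eq_bigr => v _.
under eq_integral do rewrite EFinM.
rewrite integralZl //; last exact: integrable_indic.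
by rewrite integral_indic // setIT EFinM fineK // fin_num_measure.
Qed.

End GL.

Section Disc.
Variables (R : realType) (dl : R).
Hypothesis hdl : 0 < dl.

Definition psi (y : R) := dl * (Num.truncn (y / dl))%:R.

Lemma psi_nd : {homo psi : x y / x <= y}.
Proof.
move=> x y xy; rewrite /psi; apply: ler_wpM2l; first exact: ltW.
rewrite ler_nat; apply: le_truncn.
by rewrite ler_pM2r ?invr_gt0.
Qed.

Lemma psi_neg y : y <= 0 -> psi y = 0.
Proof.
move=> y0; rewrite /psi.
have : (Num.truncn (y / dl) <= 0)%N.
  have h : y / dl <= 0 by rewrite ler_pdivrMr // mul0r.
  rewrite truncn_le_nat; apply: le_lt_trans h _; exact: ltr0Sn.
by rewrite leqn0 => /eqP ->; rewrite mulr0.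
Qed.

Lemma psi_le y : 0 <= y -> psi y <= y.
Proof.
move=> y0; rewrite /psi.
have : (Num.truncn (y / dl))%:R <= y / dl by rewrite truncn_le divr_ge0 // ltW.
rewrite ler_pdivlMr // => h; rewrite mulrC; exact: h.
Qed.

Lemma psi_gt y : y - dl < psi y.
Proof.
have h := truncnS_gt (y / dl).
rewrite -natr1 ltr_pdivrMr // mulrDl mul1r in h.
rewrite /psi mulrC; lra.
Qed.

Lemma psi_ge0 y : 0 <= psi y.
Proof. by rewrite /psi mulr_ge0 // ltW. Qed.

Definition phi0 x := psi x - psi (- x).

Lemma phi0_err x : `|x - phi0 x| <= dl /\ `|phi0 x| <= `|x|.
Proof.
rewrite /phi0; have [x0|x0] := leP 0 x.
  rewrite [psi (- x)]psi_neg ?oppr_le0 // subr0.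
  have := psi_le _ x0; have := psi_gt x; have := psi_ge0 x.
  rewrite (ger0_norm x0) (ger0_norm (psi_ge0 x)).
  by split; [rewrite ler_norml; lra|lra].
rewrite [psi x]psi_neg; last exact: ltW.
rewrite sub0r normrN (ltr0_norm x0) (ger0_norm (psi_ge0 (- x))).
have x0' : 0 <= - x by lra.
have := psi_le _ x0'; have := psi_gt (- x).
split; last lra.
rewrite opprK ler_norml; lra.
Qed.

Definition gridW (c : R) : seq R :=
  [seq dl * i%:R | i <- iota 0 (Num.truncn (c / dl)).+1] ++
  [seq - (dl * i%:R) | i <- iota 0 (Num.truncn (c / dl)).+1].

Lemma zero_grid c : 0 \in gridW c.
Proof.
rewrite mem_cat; apply/orP; left; apply/mapP; exists 0%N; last by rewrite mulr0.
by rewrite mem_iota.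
Qed.

Lemma phi0_grid c x : `|x| <= c -> phi0 x \in gridW c.
Proof.
move=> xc; rewrite /phi0 mem_cat; have [x0|x0] := leP 0 x.
  rewrite [psi (- x)]psi_neg ?oppr_le0 // subr0.
  apply/orP; left; apply/mapP; exists (Num.truncn (x / dl)) => //.
  rewrite mem_iota add0n ltnS le_truncn // ler_pM2r ?invr_gt0 //.
  by rewrite -(ger0_norm x0).
rewrite [psi x]psi_neg; last exact: ltW.
rewrite sub0r.
apply/orP; right; apply/mapP; exists (Num.truncn (- x / dl)) => //.
rewrite mem_iota add0n ltnS le_truncn // ler_pM2r ?invr_gt0 //.
by rewrite -(ltr0_norm x0).
Qed.

Definition phi (c : R) (x : R) := phi0 x * \1_[set y : R | `|y| <= c] x.

Lemma phiE c x : phi c x = if `|x| <= c then phi0 x else 0.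
Proof.
rewrite /phi indicE; case: ifP => h.
  by rewrite (mem_set (h : [set y : R | `|y| <= c] x)) mulr1.
have -> : (x \in [set y : R | `|y| <= c]) = false.
  by apply/negbTE/negP => /set_mem /=; rewrite h.
by rewrite mulr0.
Qed.

Lemma phi_grid c x : phi c x \in gridW c.
Proof. rewrite phiE; case: ifP => h; [exact: phi0_grid|exact: zero_grid]. Qed.

Lemma mphi c : measurable_fun setT (phi c).
Proof.
apply: measurable_funM; last first.
  apply: measurable_indic.
  have hn : measurable_fun setT (fun x : R => `|x|) by exact: normr_measurable.
  have := hn measurableT _ (measurable_itv `]-oo, c]).
  rewrite setTI; congr measurable; apply/seteqP; split => y /=;
  by rewrite in_itv /=.
apply: measurable_funB.
  exact: nondecreasing_measurable psi_nd.
apply: (measurableT_comp (nondecreasing_measurable measurableT psi_nd)).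
exact: measurable_funN.
Qed.

End Disc.


Section Main.
Context d (T : measurableType d) (R : realType) (P : probability T R)
  (X : nat -> {RV P >-> R}).
Hypothesis hind : mutually_independent X.
Hypothesis hid : identically_distributed X.
Hypothesis hint : P.-integrable setT (EFin \o X 0%N).
Hypothesis hmean : ('E_P[X 0%N] = 0)%E.
Variables (eps gamma K : R).
Hypotheses (heps : 0 < eps) (hgamma : 0 < gamma) (hK : 1 <= K).

Let dl := eps / 4.
Let e := eps / 2.
Let c (s : nat) := Num.max K (gamma + s.+1%:R).
Let ph (s : nat) := phi R dl (c s).

Lemma dl_gt0 : 0 < dl. Proof. by rewrite /dl divr_gt0. Qed.

Let Wu s := undup (gridW R dl (c s)).
Let p0 s u := fine (P (X 0 @^-1` (ph s @^-1` [set u]))).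
Let mu s := \sum_(u <- Wu s) u * p0 s u.
Let gs s x := ph s x - mu s.
Let V s := undup [seq u - mu s | u <- gridW R dl (c s)].

Lemma mph s : measurable_fun setT (ph s).
Proof. exact: mphi dl_gt0 _. Qed.

Lemma mgs s : measurable_fun setT (gs s).
Proof. by apply: measurable_funB => //; exact: mph. Qed.

Lemma memWu s x : ph s x \in Wu s.
Proof. by rewrite mem_undup; exact: phi_grid dl_gt0 _ _. Qed.

Lemma memV s x : gs s x \in V s.
Proof. by rewrite mem_undup /gs; apply: (map_f (fun u => u - mu s)); exact: phi_grid dl_gt0 _ _. Qed.

Lemma PT : P [set: T] = 1%E. Proof. exact: probability_setT. Qed.

Lemma int1 : (\int[P]_w (1 : R)%:E = 1)%E.
Proof. rewrite integral_cst // mul1e; exact: probability_setT. Qed.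

Lemma F1 s : \sum_(u <- Wu s) p0 s u = 1.
Proof.
apply: EFin_inj; rewrite -int1 (@GL _ _ _ P (X 0) _ _ (fun _ => 1) (mph s) (undup_uniq _) (memWu s)).
by congr (_%:E); apply: eq_bigr => u _; rewrite mul1r.
Qed.

Lemma F2 s : \sum_(v <- V s) pv d T R P X gs s v = 1.
Proof.
apply: EFin_inj; rewrite -int1 (@GL _ _ _ P (X 0) _ _ (fun _ => 1) (mgs s) (undup_uniq _) (memV s)).
by congr (_%:E); apply: eq_bigr => u _; rewrite mul1r.
Qed.

Lemma F3 s : \sum_(v <- V s) pv d T R P X gs s v * v = 0.
Proof.
have h1 := @GL _ _ _ P (X 0) _ _ id (mgs s) (undup_uniq _) (memV s).
have h2 := @GL _ _ _ P (X 0) _ _ (fun u => u - mu s) (mph s) (undup_uniq _) (memWu s).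
have HE : (\sum_(v <- V s) id v * pv d T R P X gs s v)%:E =
    (\sum_(u <- Wu s) (u - mu s) * p0 s u)%:E by rewrite -h1 -h2.
have {}HE := EFin_inj HE.
move: HE; under [in RHS]eq_bigr do rewrite mulrBl.
rewrite big_split /= -/(mu s) sumrN -mulr_sumr F1 mulr1 subrr => h.
rewrite -[RHS]h; apply: eq_bigr => v _; exact: mulrC.
Qed.

Let q s := \sum_(u <- Wu s) u ^+ 2 * p0 s u.

Lemma F4 s : sig2 d T R P X gs V s <= q s.
Proof.
have h1 := @GL _ _ _ P (X 0) _ _ (fun v => v ^+ 2) (mgs s) (undup_uniq _) (memV s).
have h2 := @GL _ _ _ P (X 0) _ _ (fun u => (u - mu s) ^+ 2) (mph s) (undup_uniq _) (memWu s).
have h : (\sum_(v <- V s) v ^+ 2 * pv d T R P X gs s v)%:E =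
    (\sum_(u <- Wu s) (u - mu s) ^+ 2 * p0 s u)%:E by rewrite -h1 -h2.
have {}h := EFin_inj h.
rewrite /sig2 (eq_bigr (fun v => v ^+ 2 * pv d T R P X gs s v)); last first.
  by move=> v _; exact: mulrC.
rewrite h.
have -> : \sum_(u <- Wu s) (u - mu s) ^+ 2 * p0 s u =
   q s - 2 * mu s * \sum_(u <- Wu s) u * p0 s u + mu s ^+ 2 * \sum_(u <- Wu s) p0 s u.
  rewrite (eq_bigr (fun u => u ^+ 2 * p0 s u - 2 * mu s * (u * p0 s u) + mu s ^+ 2 * p0 s u)); last by move=> u _; ring.
  by rewrite big_split sumrB /= -!mulr_sumr.
rewrite -/(mu s) F1.
have := sqr_ge0 (mu s); lra.
Qed.

Let D := [set w | K < `|X 0 w|].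
Let TD w := `|X 0 w| * \1_D w.

Lemma mset_gt (a : R) : measurable [set y : R | a < `|y|].
Proof.
have hn : measurable_fun setT (fun x : R => `|x|) by exact: normr_measurable.
have := hn measurableT _ (measurable_itv `]a, +oo[).
rewrite setTI; congr measurable; apply/seteqP; split => y /=;
by rewrite in_itv /= andbT.
Qed.

Lemma mD : measurable D.
Proof. exact: (measurable_funPTI (X 0) (mset_gt K)). Qed.

Lemma mem_setb (A : Type) (b : A -> bool) x : (x \in [set y | b y]) = b x.
Proof. by apply/idP/idP => [/set_mem|h] //; exact: mem_set. Qed.

Lemma TDE w : TD w = if K < `|X 0 w| then `|X 0 w| else 0.
Proof. by rewrite /TD indicE mem_setb; case: ifP; rewrite ?mulr1 ?mulr0. Qed.

Lemma TD_ge0 w : 0 <= TD w.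
Proof. by rewrite TDE; case: ifP. Qed.

Lemma mTD : measurable_fun setT TD.
Proof.
apply: measurable_funM; last exact: measurable_indic mD.
by apply: measurableT_comp => //; exact: measurable_funPT.
Qed.

Lemma mTDE : measurable_fun setT (fun w => (TD w)%:E).
Proof. exact/measurable_EFinP/mTD. Qed.

Lemma tmE : tail_mean (X 0) K = (\int[P]_w (TD w)%:E)%E.
Proof.
rewrite /tail_mean integral_mkcond; apply: eq_integral => w _.
rewrite patchE TDE mem_setb; case: ifP => //.
Qed.

Lemma intTD : P.-integrable setT (fun w => (TD w)%:E).
Proof.
apply: le_integrable hint => //; first exact: mTDE.
move=> w _ /=; rewrite lee_fin TDE; case: ifP => _ //.
  by rewrite normr_id.
by rewrite normr0.
Qed.

Lemma tm_fin : tail_mean (X 0) K \is a fin_num.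
Proof. by rewrite tmE; apply: integrable_fin_num intTD. Qed.

Let r := fine (tail_mean (X 0) K).

Lemma tmr : tail_mean (X 0) K = r%:E.
Proof. by rewrite /r fineK // tm_fin. Qed.

Lemma r_ge0 : 0 <= r.
Proof.
rewrite /r fine_ge0 // tmE; apply: integral_ge0 => w _; rewrite lee_fin.
exact: TD_ge0.
Qed.

Lemma c_ge s : K <= c s /\ gamma + s.+1%:R <= c s.
Proof. by split; rewrite /c le_max lexx ?orbT. Qed.

Lemma ph_norm s x : `|ph s x| <= `|x|.
Proof.
rewrite /ph phiE; case: ifP => _; last by rewrite normr0.
by case: (@phi0_err R dl dl_gt0 x).
Qed.

Lemma pt1 s x : `|ph s x - x| <= (if K < `|x| then `|x| else 0) + dl.
Proof.
rewrite /ph phiE; case: ifP => h.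
  case: (@phi0_err R dl dl_gt0 x) => h1 _; rewrite distrC.
  apply: le_trans h1 _; rewrite lerDr; by case: ifP.
have [cK _] := c_ge s.
have Kx : K < `|x| by move/negbT: h; rewrite -ltNge => h; exact: le_lt_trans cK h.
by rewrite Kx sub0r normrN lerDl (ltW dl_gt0).
Qed.

Lemma mu_bound s : `|mu s| <= r + dl.
Proof.
pose f w := ph s (X 0 w).
have mf : measurable_fun setT f.
  exact: (measurableT_comp (mph s) (measurable_funPT (X 0))).
have hG : (\int[P]_w (f w)%:E)%E = (mu s)%:E.
  rewrite (@GL _ _ _ P (X 0) _ _ id (mph s) (undup_uniq _) (memWu s)) //.
have intf : P.-integrable setT (EFin \o f).
  apply: (le_integrable _ _ _ (finite_measure_integrable_cst P (c s) measurableT)) => //.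
    exact/measurable_EFinP.
  move=> w _ /=; rewrite lee_fin.
  have [cK _] := c_ge s.
  have c0 : 0 <= c s by exact: le_trans (le_trans ler01 hK) cK.
  rewrite (ger0_norm c0).
  rewrite /f /ph phiE; case: ifP => h; last by rewrite normr0; lra.
  case: (@phi0_err R dl dl_gt0 (X 0 w)) => _ h2; exact: le_trans h2 h.
have h0 : (\int[P]_w (X 0 w)%:E)%E = 0%E by move: hmean; rewrite unlock.
have hB : (\int[P]_w ((f w - X 0 w)%:E))%E = (mu s)%:E.
  rewrite (eq_integral (fun w => (f w)%:E - (X 0 w)%:E))%E; last by move=> w _; rewrite EFinB.
  by rewrite integralB_EFin // hG h0 sube0.
have h1 : (`|(mu s)%:E| <= \int[P]_w `|(f w - X 0 w)%:E|)%E.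
  rewrite -hB; apply: le_abse_integral => //.
  by apply/measurable_EFinP; apply: measurable_funB => //; exact: measurable_funPT.
have h2 : (\int[P]_w `|(f w - X 0 w)%:E| <= \int[P]_w ((TD w) + dl)%:E)%E.
  rewrite (eq_integral (fun w => (`|f w - X 0 w|)%:E))%E; last first.
    by move=> w _; rewrite abse_EFin.
  apply: ge0_le_integral => //.
  - apply/measurable_EFinP; apply: measurableT_comp => //.
    by apply: measurable_funB => //; exact: measurable_funPT.
  - by apply/measurable_EFinP; apply: measurable_funD => //; exact: mTD.
  - by move=> w _; rewrite lee_fin TDE; exact: pt1.
have h3 : (\int[P]_w ((TD w) + dl)%:E)%E = (r + dl)%:E.
  rewrite (eq_integral (fun w => (TD w)%:E + dl%:E))%E; last by move=> w _; rewrite EFinD.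
  rewrite ge0_integralD //; try by [move=> w _; rewrite lee_fin ?TD_ge0 ?(ltW dl_gt0) | exact: mTDE].
  rewrite -tmE tmr integral_cst //.
  have -> : (dl%:E * P setT = dl%:E)%E.
    by rewrite -[RHS]mule1; congr (_ * _)%E; exact: probability_setT.
  by rewrite EFinD.
have := le_trans h1 h2; rewrite h3 abse_EFin lee_fin; exact.
Qed.

Lemma ph2 s x : ph s x ^+ 2 <= x ^+ 2.
Proof.
rewrite -[ph s x ^+ 2]real_normK ?num_real // -[x ^+ 2]real_normK ?num_real //.
rewrite lerXn2r ?nnegrE //; exact: ph_norm.
Qed.

Lemma pt2 n x : \sum_(s < n) (gamma + s.+1%:R)^-1 ^+ 2 * ph s x ^+ 2 <=
  K ^+ 2 / gamma + 3 * (if K < `|x| then `|x| else 0).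
Proof.
have Kg : 0 <= K ^+ 2 / gamma by rewrite divr_ge0 ?sqr_ge0 // ltW.
case: ifP => hx.
  have hx1 : 1 <= `|x| by apply: le_trans hK (ltW hx).
  apply: le_trans (_ : \sum_(s < n) (if `|x| <= gamma + s.+1%:R then
      (gamma + s.+1%:R)^-1 ^+ 2 else 0) * x ^+ 2 <= _).
    apply: ler_sum => s _; case: ifP => h.
      by rewrite ler_wpM2l ?sqr_ge0 // ph2.
    have -> : ph s x = 0.
      rewrite /ph phiE ifF // /c; apply/negbTE; rewrite -ltNge gt_max hx /=.
      by rewrite ltNge h.
    by rewrite expr0n /= mulr0 mul0r.
  rewrite -mulr_suml.
  have := @tail_sum R gamma `|x| n hgamma hx1.
  have x2 : x ^+ 2 = `|x| * `|x| by rewrite -real_normK ?num_real // expr2.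
  rewrite x2 => h.
  have x0 : 0 < `|x| by lra.
  apply: le_trans (_ : 3 / `|x| * (`|x| * `|x|) <= _).
    by rewrite ler_wpM2r // mulr_ge0.
  rewrite mulrA mulfVK ?gt_eqF //. lra.
apply: (le_trans (y := \sum_(s < n) (gamma + s.+1%:R)^-1 ^+ 2 * K ^+ 2)).
  apply: ler_sum => s _; rewrite ler_wpM2l ?sqr_ge0 //.
  apply: le_trans (ph2 s x) _.
  rewrite -[x ^+ 2]real_normK ?num_real // lerXn2r ?nnegrE //; last first.
    rewrite ?nnegrE; lra.
  exact: le_trans ler01 hK.
rewrite -mulr_suml mulr0 addr0 mulrC ler_wpM2l ?sqr_ge0 //.
exact: tel_sum1.
Qed.

Lemma ptBad n y : 0 <= y ->
  \sum_(s < n) (if c s < y then 1 else 0) <= (if K < y then y else 0).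
Proof.
move=> y0; case: ifP => hy.
  apply: le_trans (@count_sum R y n y0); apply: ler_sum => s _.
  case: ifP => h; last by case: ifP.
  have [_ cs] := c_ge s.
  rewrite ifT //; apply: lt_trans h; apply: lt_le_trans cs.
  by rewrite ltrDr.
rewrite big1 // => s _; rewrite ifF //; apply/negbTE; rewrite -leNgt.
have [cK _] := c_ge s; apply: le_trans cK; by rewrite leNgt hy.
Qed.

Lemma mphX s : measurable_fun setT (fun w => ph s (X 0 w)).
Proof. exact: (measurableT_comp (mph s) (measurable_funPT (X 0))). Qed.

Lemma hq s : (\int[P]_w ((ph s (X 0 w)) ^+ 2)%:E)%E = (q s)%:E.
Proof.
by rewrite (@GL _ _ _ P (X 0) _ _ (fun u => u ^+ 2) (mph s) (undup_uniq _) (memWu s)).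
Qed.

Lemma var_bound n : \sum_(s < n) (gamma + s.+1%:R)^-1 ^+ 2 * q s <=
  K ^+ 2 / gamma + 3 * r.
Proof.
rewrite -lee_fin.
have E1 : (\sum_(s < n) (gamma + s.+1%:R)^-1 ^+ 2 * q s)%:E =
  (\int[P]_w (\sum_(s < n) ((gamma + s.+1%:R)^-1 ^+ 2 * ph s (X 0 w) ^+ 2)%:E))%E.
  rewrite ge0_integral_sum //; last first.
  - by move=> s w _; rewrite lee_fin mulr_ge0 ?sqr_ge0.
  - move=> s; apply/measurable_EFinP; apply: measurable_funM => //.
    exact: measurable_funX (mphX s).
  rewrite -sumEFin; apply: eq_bigr => s _.
  under eq_integral do rewrite EFinM.
  rewrite ge0_integralZl //; last first.
  - by rewrite lee_fin sqr_ge0.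
  - by move=> w _; rewrite lee_fin sqr_ge0.
  - exact/measurable_EFinP/(measurable_funX _ (mphX s)).
  by rewrite hq EFinM.
rewrite E1.
apply: le_trans (_ : (\int[P]_w (K ^+ 2 / gamma + 3 * TD w)%:E <= _)%E).
  apply: ge0_le_integral => //.
  - by move=> w _; rewrite sume_ge0 // => s _; rewrite lee_fin mulr_ge0 ?sqr_ge0.
  - apply: emeasurable_sum => s; apply/measurable_EFinP; apply: measurable_funM => //.
    exact: measurable_funX (mphX s).
  - apply/measurable_EFinP; apply: measurable_funD => //; apply: measurable_funM => //.
    exact: mTD.
  - move=> w _; rewrite sumEFin lee_fin TDE; exact: pt2.
rewrite (eq_integral (fun w => (K ^+ 2 / gamma)%:E + 3%:E * (TD w)%:E))%E; last first.
  by move=> w _; rewrite EFinD EFinM.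
rewrite ge0_integralD //; try by [move=> w _; rewrite ?lee_fin ?TD_ge0 ?mule_ge0 ?lee_fin ?TD_ge0 ?divr_ge0 ?sqr_ge0 ?(ltW hgamma)].
- rewrite ge0_integralZl //; last first.
  + by move=> w _; rewrite lee_fin TD_ge0.
  + exact: mTDE.
  rewrite -tmE tmr integral_cst //.
  have -> : ((K ^+ 2 / gamma)%:E * P setT = (K ^+ 2 / gamma)%:E)%E.
    by rewrite -[RHS]mule1; congr (_ * _)%E; exact: probability_setT.
  by rewrite -EFinM -EFinD.
- by move=> w _; rewrite mule_ge0 // lee_fin TD_ge0.
- apply: emeasurable_funM => //; exact: mTDE.
Qed.

Lemma bad_bound n :
  (P [set om | exists2 s, (s < n)%N & (c s < `|X s om|)%R] <= r%:E)%E.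
Proof.
pose A := fun s => X s @^-1` [set y | c s < `|y|].
have mA s : measurable (A s) := measurable_funPTI (X s) (mset_gt (c s)).
have -> : [set om | exists2 s, (s < n)%N & c s < `|X s om|] =
    \big[setU/set0]_(s < n) A s.
  rewrite -bigcup_mkord; apply/seteqP; split => om /= [s hs h]; by exists s.
apply: le_trans (Boole_inequality P (fun i _ => mA i)) _.
pose B := fun s => X 0 @^-1` [set y | c s < `|y|].
have mB s : measurable (B s) := measurable_funPTI (X 0) (mset_gt (c s)).
have E1 : (\sum_(i < n) P (A i) =
    \int[P]_w (\sum_(i < n) (\1_(B i) w)%:E))%E.
  rewrite ge0_integral_sum //; try by [move=> i; apply/measurable_EFinP; exact: measurable_indic | move=> i w _; rewrite lee_fin].
  apply: eq_bigr => i _; rewrite integral_indic // setIT.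
  exact: hid (mset_gt (c i)).
rewrite E1 -tmr tmE.
apply: ge0_le_integral => //.
- by move=> w _; rewrite sume_ge0 // => i _; rewrite lee_fin.
- by apply: emeasurable_sum => i; apply/measurable_EFinP; exact: measurable_indic.
- exact: mTDE.
move=> w _; rewrite sumEFin lee_fin TDE.
apply: le_trans (@ptBad n `|X 0 w| (normr_ge0 (X 0 w))).
apply: ler_sum => i _; rewrite indicE; case: ifP => h.
  by rewrite (mem_set (h : B i w)).
have -> : (w \in B i) = false.
  apply/negbTE/negP => /set_mem hB; have hB2 : (c i < `|X 0 w|) := hB; by rewrite hB2 in h.
by [].
Qed.

Lemma e_gt0 : 0 < e. Proof. by rewrite /e divr_gt0. Qed.

Lemma ev_bound n : (P (Ev d T R P X n e gamma gs 0 0) <=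
  ((K ^+ 2 / gamma + 3 * r) / e ^+ 2)%:E)%E.
Proof.
have h := @rec d T R P X hid n e gamma gs V e_gt0 hgamma mgs memV F2 F3 n 0 0 setT
  (add0n n) (@indep_fromT d T R P X hind).
rewrite setTI in h; apply: le_trans h _.
have -> : (P setT * (bnd d T R P X n e gamma gs V 0 0)%:E =
           (bnd d T R P X n e gamma gs V 0 0)%:E)%E.
  by rewrite -[RHS]mul1e; congr (_ * _)%E; exact: probability_setT.
rewrite lee_fin /bnd expr0n /= mulr0 add0r.
have e2 : 0 < e ^+ 2 by rewrite exprn_gt0 // e_gt0.
rewrite ler_pM2r ?invr_gt0 //.
apply: le_trans (var_bound n).
rewrite big_mkord; apply: ler_sum => s _.
by rewrite ler_wpM2l ?sqr_ge0 // F4.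
Qed.

Lemma term_bound s x : `|x| <= c s -> `|x - gs s x| <= eps / 2 + r.
Proof.
move=> hx.
have -> : x - gs s x = (x - ph s x) + mu s by rewrite /gs; ring.
apply: le_trans (ler_normD _ _) _.
have h1 : `|x - ph s x| <= dl.
  rewrite /ph phiE hx; by case: (@phi0_err R dl dl_gt0 x).
have h2 := mu_bound s.
have -> : eps / 2 + r = dl + (r + dl) by rewrite /dl; field.
exact: lerD h1 h2.
Qed.

Lemma contain n t om : (t <= n)%N ->
  eps + r < (gamma + t%:R)^-1 * `|\sum_(s < t) X s om| ->
  [set om | exists2 s, (s < n)%N & (c s < `|X s om|)%R] om \/
  Ev d T R P X n e gamma gs 0 0 om.
Proof.
move=> tn h.
case: (pselect (exists2 s, (s < n)%N & c s < `|X s om|)) => [hb|hb]; first by left.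
right.
have hs s : (s < t)%N -> `|X s om| <= c s.
  move=> st; rewrite leNgt; apply/negP => h'; apply: hb; exists s => //.
  exact: leq_trans st tn.
exists t; split; first by rewrite leq0n tn.
rewrite add0r big_mkord.
set W := (gamma + t%:R)^-1 in h *.
have W0 : 0 < W by rewrite /W invr_gt0 ltr_wpDr.
have Wt : W * t%:R <= 1.
  rewrite /W mulrC ler_pdivrMr ?mul1r ?ltr_wpDr //.
  by rewrite lerDr ltW.
have key : `|\sum_(s < t) X s om| <=
    `|\sum_(s < t) gs s (X s om)| + t%:R * (eps / 2 + r).
  have -> : \sum_(s < t) X s om =
      \sum_(s < t) gs s (X s om) + \sum_(s < t) (X s om - gs s (X s om)).
    by rewrite -big_split /=; apply: eq_bigr => s _; rewrite addrC subrK.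
  apply: le_trans (ler_normD _ _) _; rewrite lerD2l.
  apply: le_trans (ler_norm_sum _ _ _) _.
  apply: le_trans (_ : \sum_(s < t) (eps / 2 + r) <= _).
    by apply: ler_sum => s _; apply: term_bound; apply: hs.
  by rewrite sumr_const card_ord mulr_natl.
have k2 : W * `|\sum_(s < t) X s om| <=
    W * `|\sum_(s < t) gs s (X s om)| + (W * t%:R) * (eps / 2 + r).
  by have := ler_wpM2l (ltW W0) key; rewrite mulrDr mulrA.
have er0 : 0 <= eps / 2 + r by rewrite addr_ge0 ?r_ge0 // divr_ge0 // ltW.
have k3 : (W * t%:R) * (eps / 2 + r) <= eps / 2 + r by exact: ler_piMl.
have : eps = eps / 2 + eps / 2 by field.
rewrite /e; lra.
Qed.

Lemma final : (P [set w | (eps%:E + tail_mean (X 0%N) K <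
        ereal_sup [set ((gamma + t%:R)^-1 * `|\sum_(s < t) X s w|)%:E
                   | t in [set t : nat | (1 <= t)%N]])%E]
   <= (8 * K ^+ 2 / (gamma * eps ^+ 2))%:E
      + (16 / eps ^+ 2 + 2)%:E * tail_mean (X 0%N) K)%E.
Proof.
set M := [set w | _].
pose Bad n := [set om | exists2 s, (s < n)%N & (c s < `|X s om|)%R].
have mBad n : measurable (Bad n).
  have -> : Bad n = \bigcup_(s in [set s | (s < n)%N]) (X s @^-1` [set y | c s < `|y|]).
    by apply/seteqP; split => om /= [s hs h]; exists s.
  apply: bigcup_measurable => s _; apply: measurable_funPTI; exact: mset_gt.
pose Fn n := Bad n `|` Ev d T R P X n e gamma gs 0 0.
have mF n : measurable (Fn n).
  apply: measurableU => //; exact: (@mEv d T R P X n e gamma gs mgs 0 0).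
have bndF n : (P (Fn n) <= (r + (K ^+ 2 / gamma + 3 * r) / e ^+ 2)%:E)%E.
  apply: le_trans (measureU2 _ (mBad n) (@mEv d T R P X n e gamma gs mgs 0 0)) _.
  rewrite EFinD; apply: leeD; [exact: bad_bound|exact: ev_bound].
have sub : M `<=` \bigcup_n Fn n.
  move=> om; rewrite /M /= tmr => hM.
  have [y [t t1 <-] hy] := ereal_sup_gt hM.
  rewrite -EFinD lte_fin in hy.
  exists t => //; exact: contain (leqnn t) hy.
have mU : measurable (\bigcup_n Fn n) by exact: bigcup_measurable.
have mM : measurable M.
  have -> : M = \bigcup_(t in [set t : nat | (1 <= t)%N])
      [set om | eps + r < (gamma + t%:R)^-1 * `|\sum_(s < t) X s om|].
    apply/seteqP; split => om.
      rewrite /M /= tmr => hM.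
      have [y [t t1 <-] hy] := ereal_sup_gt hM.
      by rewrite -EFinD lte_fin in hy; exists t.
    move=> [t t1 /= ht]; rewrite /M /= tmr.
    apply: lt_le_trans (_ : ((gamma + t%:R)^-1 * `|\sum_(s < t) X s om|)%:E <= _)%E.
      by rewrite -EFinD lte_fin.
    by apply: ereal_sup_ubound; exists t.
  apply: bigcup_measurable => t _.
  have mf : measurable_fun setT
      (fun om => (gamma + t%:R)^-1 * `|\sum_(s < t) X s om|).
    apply: measurable_funM => //; apply: measurableT_comp => //.
    by apply: measurable_sum => s; exact: measurable_funPT.
  have := mf measurableT _ (measurable_itv `]eps + r, +oo[); rewrite setTI.
  congr measurable; apply/seteqP; split => om /=; rewrite in_itv /= andbT //.
apply: le_trans (le_measure _ _ _ sub) _.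
- by rewrite inE.
- by rewrite inE.
have ndF : {homo Fn : n m / (n <= m)%N >-> (n <= m)%O}.
  move=> n m nm; apply/subsetPset => om [[s sn h]|[t [ht h]]].
    by left; exists s => //; exact: leq_trans sn nm.
  right; exists t; split => //; case/andP: ht => h1 h2.
  by rewrite h1 (leq_trans h2 nm).
have hc := @nondecreasing_cvg_mu _ _ _ P Fn mF mU ndF.
apply: (le_trans (y := lim ((P \o Fn) x @[x --> \oo]))).
  rewrite (cvg_lim _ hc) //; exact: lexx.
apply: le_trans.
  apply: lime_le; first exact: cvgP hc.
  by apply: nearW => n; exact: bndF n.
rewrite tmr -EFinM -EFinD lee_fin.
have g0 := hgamma.
have ez : 0 < eps ^+ 2 by rewrite exprn_gt0.
set z := (eps ^+ 2)^-1.
have z0 : 0 < z by rewrite /z invr_gt0.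
set A := K ^+ 2 / gamma.
have A0 : 0 <= A by rewrite /A divr_ge0 ?sqr_ge0 // ltW.
have -> : (A + 3 * r) / e ^+ 2 = 4 * A * z + 12 * r * z.
  rewrite /e /z; field; by rewrite gt_eqF.
have -> : 8 * K ^+ 2 / (gamma * eps ^+ 2) = 8 * A * z.
  rewrite /A /z; field; rewrite ?gt_eqF //; apply/andP; split; by rewrite gt_eqF.
have -> : (16 / eps ^+ 2 + 2) * r = 16 * r * z + 2 * r by rewrite /z; ring.
have := r_ge0.
have : 0 <= A * z by rewrite mulr_ge0 // ltW.
have : 0 <= r * z by rewrite mulr_ge0 ?r_ge0 // ltW.
nra.
Qed.

End Main.

Theorem mainTheorem6 (d : measure_display) (T : measurableType d) (R : realType)
  (P : probability T R) (X : nat -> {RV P >-> R})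
  (hiid : iid X)
  (hint : P.-integrable setT (EFin \o X 0%N))
  (hmean : ('E_P[X 0%N] = 0)%E)
  (eps gamma K : R) (heps : 0 < eps) (hgamma : 0 < gamma) (hK : 1 <= K) :
  (P [set w | (eps%:E + tail_mean (X 0%N) K <
        ereal_sup [set ((gamma + t%:R)^-1 * `|\sum_(s < t) X s w|)%:E
                   | t in [set t : nat | (1 <= t)%N]])%E]
   <= (8 * K ^+ 2 / (gamma * eps ^+ 2))%:E
      + (16 / eps ^+ 2 + 2)%:E * tail_mean (X 0%N) K)%E.
Proof.
case: hiid => hind hid.
exact: (@final d T R P X hind hid hint hmean eps gamma K heps hgamma hK).
Qed.
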